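(* Let $k$ be a field, $S=k[x_1,\dots,x_n]$, $\mathfrak m=(x_1,\dots,x_n)$, and let $I=(f_1,\dots,f_r)\subseteq S$ be a linearly presented $\mathfrak m$-primary ideal. Let $B=k[T_1,\dots,T_r]$, let $\Theta$ be the Jacobian dual matrix of a presentation matrix of $I$, and let $I_n(\Theta)\subseteq B$ be the ideal of its $n\times n$ minors. Let $W\subseteq\mathbb P^{r-1}$ be the image of the map $\phi:\mathbb P^{n-1}\to\mathbb P^{r-1}$, $\phi(\mathbf x)=(f_1(\mathbf x):\dots:f_r(\mathbf x))$, and $I(W)\subseteq B$ its homogeneous defining ideal. Then $\sqrt{I_n(\Theta)}=I(W)$.
   Context: ''Linearly presented'' means $I$ is generated by forms $f_1,\dots,f_r$ of a common degree $d$ and its module of syzygies is generated by syzygies $\sum_i a_i(\mathbf x)f_i=0$ with the $a_i$ linear forms. The defining ideal $J\subseteq k[x_1,\dots,x_n,T_1,\dots,T_r]$ of the symmetric algebra $\mathrm{Sym}(I)$ is generated by the bilinear forms $L=\sum_i a_i(\mathbf x)T_i$ attached to the linear syzygies; let $L_1,\dots,L_N$ be minimal generators of $J$ (corresponding to minimal generators of the syzygy module). The Jacobian dual $\Theta$ is the $N\times n$ matrix whose entries are linear forms in $T_1,\dots,T_r$ such that $\Theta\cdot(x_1,\dots,x_n)^T=(L_1,\dots,L_N)^T$. Since $I$ is $\mathfrak m$-primary, $\phi$ is a morphism; $I(W)$ is the kernel of the $k$-algebra map $B\to S$, $T_i\mapsto f_i$. *)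

(* Defs.v *)
From HB Require Import structures.
From mathcomp Require Import all_boot all_order all_algebra.
From mathcomp Require Import mpoly.
Set Implicit Arguments. Unset Strict Implicit. Unset Printing Implicit Defensive.
Import GRing.Theory.
Local Open Scope ring_scope.

Definition in_ideal (k : fieldType) (n : nat) (I : finType)
    (g : I -> {mpoly k[n]}) (p : {mpoly k[n]}) : Prop :=
  exists c : I -> {mpoly k[n]}, p = \sum_(i : I) c i * g i.

Definition in_radical (k : fieldType) (n : nat) (I : finType)
    (g : I -> {mpoly k[n]})
    (p : {mpoly k[n]}) : Prop :=
  exists e : nat, in_ideal g (p ^+ e).

Definition is_syzygy (k : fieldType) (n r : nat) (f : 'I_r -> {mpoly k[n]})
    (b : 'I_r -> {mpoly k[n]}) : Prop :=
  \sum_(i < r) b i * f i = 0.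

Definition in_submodule (k : fieldType) (n r N : nat)
    (a : 'I_N -> 'I_r -> {mpoly k[n]}) (P : pred 'I_N)
    (b : 'I_r -> {mpoly k[n]}) : Prop :=
  exists c : 'I_N -> {mpoly k[n]},
    forall i : 'I_r, b i = \sum_(j < N | P j) c j * a j i.

Definition minimal_linear_presentation (k : fieldType) (n r N : nat)
    (f : 'I_r -> {mpoly k[n]}) (a : 'I_N -> 'I_r -> {mpoly k[n]}) : Prop :=
  [/\ forall j i, a j i \is 1.-homog,
      forall j, is_syzygy f (a j),
      forall b, is_syzygy f b -> in_submodule a predT b &
      forall j, ~ in_submodule a (predC1 j) (a j)].

(* The Jacobian dual matrix Theta (N x n, entries linear forms in T_1..T_r)
   of the linear syzygies a: the bilinear form L_j = sum_i a_{ji}(x) T_i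
   equals sum_l Theta_{jl} x_l, i.e. Theta_{jl} = sum_i [x_l](a_{ji}) T_i. *)
Definition jacobian_dual (k : fieldType) (n r N : nat)
    (a : 'I_N -> 'I_r -> {mpoly k[n]}) : 'M[{mpoly k[r]}]_(N, n) :=
  \matrix_(j < N, l < n) \sum_(i < r) ((a j i)@_(U_(l)%MM)) *: 'X_i.

Definition maximal_minors (R : comNzRingType) (N n : nat) (M : 'M[R]_(N, n))
    : {ffun 'I_n -> 'I_N} -> R :=
  fun s => if injectiveb s then \det (rowsub s M) else 0.

(* I(W) : kernel of the k-algebra map B = k[T_1..T_r] -> S, T_i |-> f_i. *)
Definition image_ideal (k : fieldType) (n r : nat) (f : 'I_r -> {mpoly k[n]})
    (g : {mpoly k[r]}) : Prop :=
  g \mPo [tuple f i | i < r] = 0.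

(* Main.v *)
Require Import Defs.
From HB Require Import structures.
From mathcomp Require Import all_boot all_order all_algebra.
From mathcomp Require Import mpoly.
From mathcomp Require Import perm.
From mathcomp Require boolp classical_sets.
From Stdlib Require Import Classical.
From mathcomp Require Import ring.
Set Implicit Arguments. Unset Strict Implicit. Unset Printing Implicit Defensive.
Import GRing.Theory.
Local Open Scope ring_scope.



Definition idealP (B : comRingType) (P : B -> Prop) :=
  [/\ P 0, (forall x y, P x -> P y -> P (x + y)) & (forall c x, P x -> P (c * x))].

Definition in_idealG (B : comRingType) (I : finType) (G : I -> B) (p : B) :=
  exists c : I -> B, p = \sum_(i : I) c i * G i.

Definition goodI (B : comRingType) (I : finType) (G : I -> B) (g : B) (X : B -> Prop) :=
  [/\ forall x y, X x -> X y -> X (x + y), forall c x, X x -> X (c * x),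
      forall i, X (G i) & forall e, ~ X (g ^+ e)].

Lemma exists_prime (B : comRingType) (I : finType) (G : I -> B) (g : B) :
  (forall e, ~ in_idealG G (g ^+ e)) ->
  exists P : B -> Prop, [/\ idealP P, (forall x y, P (x * y) -> P x \/ P y),
     (forall i, P (G i)) & forall e, ~ P (g ^+ e)].
Proof.
move=> Hg.
pose Fam := fun X : B -> Prop => (forall x, ~ X x) \/ goodI G g X.
have [A [FA maxA]] : exists A, Fam A /\ forall C, classical_sets.proper A C -> ~ Fam C.
  apply: classical_sets.Zorn_bigcup => F FF totF.
  case: (classic (exists x, classical_sets.bigcup F id x)); last first.
    by move=> H; left => x Hx; apply: H; exists x.
  case=> x0 [X0 FX0 X0x0].
  have gX0 : goodI G g X0 by case: (FF X0 FX0) => // /(_ x0).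
  have gen : forall X, F X -> forall x, X x -> goodI G g X.
    by move=> X FX x Xx; case: (FF X FX) => // /(_ x).
  right; split.
  - move=> x y [Xa Fa xa] [Xb Fb yb].
    case: (totF Xa Xb Fa Fb) => Hs.
    + exists Xb => //; case: (gen Xb Fb y yb) => Hadd _ _ _; exact: Hadd (Hs x xa) yb.
    + exists Xa => //; case: (gen Xa Fa x xa) => Hadd _ _ _; exact: Hadd xa (Hs y yb).
  - move=> c x [Xa Fa xa]; exists Xa => //.
    by case: (gen Xa Fa x xa) => _ Hm _ _; exact: Hm.
  - by move=> i; exists X0 => //; case: gX0.
  - move=> e [Xa Fa xa]; by case: (gen Xa Fa _ xa) => _ _ _ /(_ e).
have gJ : goodI G g (in_idealG G).
  split.
  - move=> x y [c1 ->] [c2 ->]; exists (fun i => c1 i + c2 i).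
    by rewrite -big_split /=; apply: eq_bigr => i _; rewrite mulrDl.
  - move=> c x [c1 ->]; exists (fun i => c * c1 i).
    by rewrite mulr_sumr; apply: eq_bigr => i _; rewrite mulrA.
  - move=> i; exists (fun j => (j == i)%:R).
    rewrite (bigD1 i) //= eqxx mul1r big1 ?addr0 // => j /negbTE ->.
    by rewrite mul0r.
  - exact: Hg.
have gJ0 : in_idealG G 0 by exists (fun _ => 0); rewrite big1 // => i _; rewrite mul0r.
have [x0 Ax0] : exists x0, A x0.
  apply: NNPP => Hne; apply: (maxA (in_idealG G)); last by right.
  split; first by move=> x Ax; exfalso; apply: Hne; exists x.
  by move=> /(_ 0 gJ0) A0; apply: Hne; exists 0.
have gA : goodI G g A by case: FA => // /(_ x0).
case: (gA) => Aadd Amul AG Ag.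
have A0 : A 0 by rewrite -(mul0r x0); apply: (Amul).
exists A; split => //.
move=> a b Aab; apply: NNPP => /not_or_and [Na Nb].
have ext : forall z, ~ A z -> exists e, exists y c, A y /\ g ^+ e = y + c * z.
  move=> z Nz; apply: NNPP => He.
  apply: (maxA (fun x => exists y c, A y /\ x = y + c * z)).
    split; first by move=> x Ax; exists x, 0; rewrite mul0r addr0.
    by move=> /(_ z) H; apply: Nz; apply: H; exists 0, 1; rewrite add0r mul1r.
  right; split.
  - move=> x1 x2 [y1 [c1 [Ay1 ->]]] [y2 [c2 [Ay2 ->]]].
    exists (y1 + y2), (c1 + c2); split; first exact: Aadd.
    by ring.
  - move=> c x [y1 [c1 [Ay1 ->]]]; exists (c * y1), (c * c1); split; first exact: Amul.
    by ring.
  - by move=> i; exists (G i), 0; rewrite mul0r addr0; split => //; apply: (AG).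
  - by move=> e He'; apply: He; exists e.
have [e1 [y1 [c1 [Ay1 E1]]]] := ext a Na.
have [e2 [y2 [c2 [Ay2 E2]]]] := ext b Nb.
apply: (Ag (e1 + e2)%N); rewrite exprD E1 E2.
have -> : (y1 + c1 * a) * (y2 + c2 * b) = y1 * (y2 + c2 * b) + ((c1 * a) * y2 + (c1 * c2) * (a * b)).
  by ring.
apply: (Aadd); first by rewrite mulrC; apply: (Amul).
by apply: (Aadd); apply: (Amul).
Qed.
Section IdealLemmas.
Variables (B : comRingType) (P : B -> Prop).
Hypothesis iP : idealP P.

Lemma Psum (I : Type) (s : seq I) (Q : pred I) (F : I -> B) :
  (forall i, Q i -> P (F i)) -> P (\sum_(i <- s | Q i) F i).
Proof. case: iP => P0 Padd _ H; exact: (big_ind P P0 Padd). Qed.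

Lemma Pmul c x : P x -> P (c * x).
Proof. by case: iP => _ _ H; apply: H. Qed.

Lemma Padd x y : P x -> P y -> P (x + y).
Proof. by case: iP => _ H _; apply: H. Qed.

Lemma Pneg x : P x -> P (- x).
Proof. by move=> Px; rewrite -mulN1r; apply: Pmul. Qed.

Lemma Psub x y : P x -> P y -> P (x - y).
Proof. by move=> Px Py; apply: Padd => //; apply: Pneg. Qed.

Lemma Pcong_mul a1 b1 a2 b2 : P (a1 - b1) -> P (a2 - b2) -> P (a1 * a2 - b1 * b2).
Proof.
move=> H1 H2; have -> : a1 * a2 - b1 * b2 = a2 * (a1 - b1) + b1 * (a2 - b2) by ring.
by apply: Padd; apply: Pmul.
Qed.

Lemma Pcong_prod (I : Type) (s : seq I) (Q : pred I) (x y : I -> B) :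
  (forall i, Q i -> P (x i - y i)) -> P (\prod_(i <- s | Q i) x i - \prod_(i <- s | Q i) y i).
Proof.
move=> H; apply: (big_ind2 (fun a b => P (a - b))) => //.
- by rewrite subrr; case: iP.
- by move=> ? ? ? ?; apply: Pcong_mul.
Qed.

Lemma Pcong_pow x y k : P (x - y) -> P (x ^+ k - y ^+ k).
Proof.
move=> H; elim: k => [|k IH]; first by rewrite !expr0 subrr; case: iP.
by rewrite !exprS; apply: Pcong_mul.
Qed.

Lemma Pnot_pow (Ppr : forall x y, P (x * y) -> P x \/ P y) q :
  ~ P 1 -> ~ P q -> forall k, ~ P (q ^+ k).
Proof.
move=> N1 Nq; elim=> [|k IH]; first by rewrite expr0.
by rewrite exprS => H; case: (Ppr _ _ H).
Qed.

End IdealLemmas.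




Lemma noninj (T : finType) (U : eqType) (h : T -> U) :
  ~~ injectiveb h -> exists i1 i2, i1 != i2 /\ h i1 = h i2.
Proof.
move/injectiveP => H; apply: NNPP => H'; apply: H => x y E.
case: (eqVneq x y) => // ne; exfalso; apply: H'; exists x, y; split => //.
Qed.

Lemma claim1 (B : comRingType) N n (T : 'M[B]_(N, n)) (P : B -> Prop) :
  idealP P -> (forall s, P (maximal_minors T s)) ->
  forall (R : 'I_n -> 'I_N) (C : 'I_n -> 'I_n), P (\det (mxsub R C T)).
Proof.
case=> P0 Padd Pmul Hmin R C.
case: (boolP (injectiveb R)) => [/injectiveP Rinj|nR]; last first.
  have [i1 [i2 [ne E]]] := noninj nR.
  by rewrite (determinant_alternate ne) // => j; rewrite !mxE E.
case: (boolP (injectiveb C)) => [/injectiveP Cinj|nC]; last first.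
  have [i1 [i2 [ne E]]] := noninj nC.
  by rewrite -det_tr (determinant_alternate ne) // => j; rewrite !mxE E.
have -> : mxsub R C T = col_perm (perm Cinj) (mxsub R id T).
  by apply/matrixP => i j; rewrite !mxE permE.
rewrite col_permE det_mulmx mulrC; apply: Pmul.
have := Hmin [ffun i => R i]; rewrite /maximal_minors.
have -> : injectiveb [ffun i => R i].
  by apply/injectiveP => x y; rewrite !ffunE; exact: Rinj.
have -> // : mxsub (fun i => [ffun i => R i] i) id T = mxsub R id T.
by apply/matrixP => i j; rewrite !mxE ffunE.
Qed.

Lemma threshold (Q : nat -> Prop) n : Q 0%N -> ~ Q n ->
  exists m, (m < n)%N /\ Q m /\ ~ Q m.+1.
Proof.
elim: n => [//|n IH] Q0 Qn.
case: (classic (Q n)) => Hn; first by exists n.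
have [m [lt [Qm Qm1]]] := IH Q0 Hn; exists m; split => //; exact: ltnW.
Qed.

Lemma ord0_absurd (X : Type) (i : 'I_0) : X.
Proof. by case: i. Qed.

Lemma kernel_vec (B : comRingType) N n (T : 'M[B]_(N, n)) (P : B -> Prop) :
  idealP P -> ~ P 1 -> (forall s, P (maximal_minors T s)) ->
  exists p : 'I_n -> B, (exists c, ~ P (p c)) /\ forall j, P (\sum_l T j l * p l).
Proof.
move=> iP N1 Hmin.
pose Q m := exists (R : 'I_m -> 'I_N) (C : 'I_m -> 'I_n), ~ P (\det (mxsub R C T)).
have Q0 : Q 0%N by exists (@ord0_absurd _), (@ord0_absurd _); rewrite det_mx00.
have Qn : ~ Q n by case=> R [C]; apply; exact: claim1.
have [m [ltmn [[R [C nPRC]] nQ1]]] := threshold Q0 Qn.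
have allP1 : forall R' C', P (\det (@mxsub _ _ _ m.+1 m.+1 R' C' T)).
  by move=> R' C'; apply: NNPP => H; apply: nQ1; exists R', C'.
have [c cC] : exists c : 'I_n, c \notin codom C.
  apply: NNPP => H.
  have sub : {subset enum 'I_n <= codom C}.
    move=> x _; apply: NNPP => Hx; apply: H; exists x; exact/negP.
  have := uniq_leq_size (enum_uniq _) sub.
  by rewrite size_enum_ord size_codom card_ord leqNgt ltmn.
pose C' (k : 'I_m.+1) := if unlift ord0 k is Some k' then C k' else c.
pose R' (j : 'I_N) (k : 'I_m.+1) := if unlift ord0 k is Some k' then R k' else j.
pose cof (k : 'I_m.+1) := (-1) ^+ (@ord0 m + k) *
   \det (\matrix_(i < m, k' < m) T (R i) (C' (lift k k'))).
have cofE : forall j k, cofactor (mxsub (R' j) C' T) ord0 k = cof k.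
  move=> j k; rewrite /cofactor /cof; congr (_ * \det _).
  by apply/matrixP => i k'; rewrite !mxE /R' liftK.
pose p l := \sum_(k | C' k == l) cof k.
exists p; split.
  exists c; rewrite /p (big_pred1 ord0); last first.
    move=> k; rewrite /C'; case: unliftP => [k' ->|->]; last by rewrite !eqxx.
    have -> : pred1 ord0 (lift ord0 k') = false by apply/negbTE; rewrite inE eq_sym neq_lift.
    apply/negbTE; apply: contra cC => /eqP <-.
    exact: codom_f.
  rewrite /cof expr0 mul1r; move: nPRC; congr (~ P (\det _)).
  by apply/matrixP => i k'; rewrite !mxE /C' liftK.
move=> j; have := allP1 (R' j) C'.
rewrite (expand_det_row _ ord0).
rewrite (partition_big C' predT) //=.
congr P; apply: eq_bigr => l _; rewrite /p mulr_sumr; apply: eq_bigr => k /eqP <-.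
by rewrite cofE !mxE /R' unlift_none.
Qed.



Lemma mnm1_eqE n (i j : 'I_n) : (U_(i) == U_(j) :> 'X_{1..n})%MM = (i == j).
Proof.
apply/eqP/eqP => [E|->//]; have := congr1 (fun m : 'X_{1..n} => m i) E.
by rewrite /= !mnm1E eqxx; case: eqP.
Qed.

Lemma lin_decomp (k : fieldType) n (p : {mpoly k[n]}) :
  p \is 1.-homog -> p = \sum_(l < n) p@_U_(l) *: 'X_l.
Proof.
move=> hp; apply/mpolyP => M.
rewrite raddf_sum /=.
under eq_bigr do rewrite mcoeffZ mcoeffX.
case: (boolP (mdeg M == 1%N)) => [/mdeg1P [l /eqP ->]|nM].
  rewrite (bigD1 l) //= eqxx mulr1 big1 ?addr0 // => l' ne.
  by rewrite mnm1_eqE (negbTE ne) mulr0.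
rewrite (dhomog_nemf_coeff hp nM) big1 // => l _.
case: eqP => [E|]; last by rewrite mulr0.
by move: nM; rewrite -E mdeg1.
Qed.

Definition tup (R : Type) n (q : 'I_n -> R) : n.-tuple R := [tuple q l | l < n].

Lemma tupE (R : ringType) n (q : 'I_n -> R) (l : 'I_n) : (tup q)`_l = q l.
Proof. by rewrite -tnth_nth tnth_mktuple. Qed.

Lemma tnth_tup (R : Type) n (q : 'I_n -> R) l : tnth (tup q) l = q l.
Proof. exact: tnth_mktuple. Qed.

Lemma comp_sum (k : fieldType) n r (t : n.-tuple {mpoly k[r]}) (I : Type) (s : seq I) (P : pred I) (F : I -> {mpoly k[n]}) :
  (\sum_(i <- s | P i) F i) \mPo t = \sum_(i <- s | P i) (F i \mPo t).
Proof. exact: (big_morph _ (comp_mpolyD t) (comp_mpoly0 t)). Qed.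

Lemma comp_lin (k : fieldType) n r (p : {mpoly k[n]}) (t : n.-tuple {mpoly k[r]}) :
  p \is 1.-homog -> p \mPo t = \sum_l p@_U_(l) *: t`_l.
Proof.
move=> hp; rewrite {1}(lin_decomp hp) comp_sum; apply: eq_bigr => l _.
by rewrite comp_mpolyZ comp_mpolyXU.
Qed.

Lemma X_neq0 (k : fieldType) n (l : 'I_n) : ('X_l : {mpoly k[n]}) != 0.
Proof.
apply/eqP => E; have := congr1 (mcoeff U_(l)) E.
by rewrite mcoeffX eqxx mcoeff0 => /eqP; rewrite oner_eq0.
Qed.

Lemma homog0_const (k : fieldType) n (p : {mpoly k[n]}) :
  p \is 0.-homog -> p = (p@_0)%:MP.
Proof.
move=> hp; apply/mpolyP => M; rewrite mcoeffC.
case: (eqVneq M 0%MM) => [->|nM]; first by rewrite mulr1.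
rewrite mulr0; apply: (dhomog_nemf_coeff hp); by rewrite mdeg_eq0.
Qed.

Lemma homog_compX (k : fieldType) n r d (t : n.-tuple {mpoly k[r]}) (m : 'X_{1..n}) :
  (forall i, tnth t i \is d.-homog) -> 'X_[m] \mPo t \is (d * mdeg m).-homog.
Proof.
move=> ht; rewrite comp_mpolyX mdegE big_distrr /=.
apply: (big_ind2 (fun D (q : {mpoly k[r]}) => q \is D.-homog)).
- exact: dhomog1.
- by move=> D1 q1 D2 q2 h1 h2; apply: dhomogM.
- by move=> i _; apply: dhomogMn.
Qed.

Lemma pihomog_compE (k : fieldType) n r (t : n.-tuple {mpoly k[r]}) de (g : {mpoly k[n]}) :
  (pihomog mdeg de g) \mPo t =
  \sum_(m <- msupp g | mdeg m == de) g@_m *: ('X_[m] \mPo t).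
Proof.
rewrite pihomogE comp_sum; apply: eq_bigr => m _; by rewrite comp_mpolyZ.
Qed.

Lemma homog_comp_pihomog (k : fieldType) n r d (t : n.-tuple {mpoly k[r]}) de (g : {mpoly k[n]}) :
  (forall i, tnth t i \is d.-homog) -> (pihomog mdeg de g) \mPo t \is (d * de).-homog.
Proof.
move=> ht; rewrite pihomog_compE; apply: rpred_sum => m /eqP <-.
by apply: rpredZ; apply: homog_compX.
Qed.

Lemma pihomog_comp0 (k : fieldType) n r d (t : n.-tuple {mpoly k[r]}) (g : {mpoly k[n]}) :
  (0 < d)%N -> (forall i, tnth t i \is d.-homog) -> g \mPo t = 0 ->
  forall de, (pihomog mdeg de g) \mPo t = 0.
Proof.
move=> d0 ht g0 de.
have lt : (de < maxn (msize g) de.+1)%N by rewrite leq_max ltnSn orbT.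
have := congr1 (pihomog mdeg (d * de)) g0.
have gE : g = \sum_(i < maxn (msize g) de.+1) pihomog mdeg i g.
  by apply: pihomog_partitionE; rewrite leq_max leqnn.
rewrite {1}gE comp_sum raddf_sum raddf0 /= (bigD1 (Ordinal lt)) //=.
rewrite (pihomog_dE (homog_comp_pihomog _ _ ht)) big1 ?addr0 // => i ne.
apply: (pihomog_ne0 _ (homog_comp_pihomog _ _ ht)).
rewrite eqn_pmul2l //; apply: contra ne => /eqP E; apply/eqP; exact: val_inj.
Qed.



Lemma theta_comp (k : fieldType) n r N (f : 'I_r -> {mpoly k[n]})
  (a : 'I_N -> 'I_r -> {mpoly k[n]}) :
  (forall j i, a j i \is 1.-homog) -> (forall j, is_syzygy f (a j)) ->
  forall j, \sum_l ((jacobian_dual a j l) \mPo tup f) * 'X_l = 0.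
Proof.
move=> ha hs j; rewrite -[RHS](hs j) /is_syzygy.
under eq_bigr => l _ do rewrite mxE comp_sum mulr_suml.
rewrite exchange_big /=; apply: eq_bigr => i _.
rewrite {2}(lin_decomp (ha j i)) mulr_suml; apply: eq_bigr => l _.
by rewrite comp_mpolyZ comp_mpolyXU tupE -!scalerAl mulrC.
Qed.

Lemma minors_comp0 (k : fieldType) n r N (f : 'I_r -> {mpoly k[n]})
  (a : 'I_N -> 'I_r -> {mpoly k[n]}) :
  (0 < n)%N ->
  (forall j i, a j i \is 1.-homog) -> (forall j, is_syzygy f (a j)) ->
  forall s, maximal_minors (jacobian_dual a) s \mPo tup f = 0.
Proof.
move=> n0 ha hs s; rewrite /maximal_minors; case: ifP => _; last exact: comp_mpoly0.
pose A := map_mx (comp_mpoly (tup f)) (mxsub s id (jacobian_dual a)).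
rewrite -det_map_mx -/A.
pose xv : 'cV[{mpoly k[n]}]_n := \col_l 'X_l.
have Ax : A *m xv = 0.
  apply/matrixP => i z; rewrite !mxE -[RHS](theta_comp ha hs (s i)).
  by apply: eq_bigr => l _; rewrite !mxE.
have := congr1 (mulmx (\adj A)) Ax.
rewrite mulmxA mul_adj_mx mul_scalar_mx mulmx0 => /matrixP /(_ (Ordinal n0) ord0).
rewrite !mxE => /eqP; rewrite mulf_eq0 (negbTE (X_neq0 _ _)) orbF => /eqP //.
Qed.



Lemma sum_delta (R : pzRingType) r (F : 'I_r -> R) i :
  \sum_(i' < r) (i' == i)%:R * F i' = F i.
Proof.
rewrite (bigD1 i) //= eqxx mul1r big1 ?addr0 // => j /negbTE ->; by rewrite mul0r.
Qed.

Theorem lemma2p3 (k : fieldType) (n r N d : nat)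
    (f : 'I_r -> {mpoly k[n]}) (a : 'I_N -> 'I_r -> {mpoly k[n]}) :
  (0 < n)%N ->
  (* I = (f_1,...,f_r) generated by forms of common degree d *)
  (forall i, f i \is d.-homog) ->
  (* I is m-primary: sqrt(I) = m = (x_1,...,x_n), I proper *)
  (forall l : 'I_n, exists e : nat, in_ideal f ('X_l ^+ e)) ->
  ~ in_ideal f 1 ->
  (* linearly presented, a_1..a_N minimal generators of the syzygy module *)
  minimal_linear_presentation f a ->
  forall g : {mpoly k[r]},
    in_radical (maximal_minors (jacobian_dual a)) g <-> image_ideal f g.
Proof.
move=> n0 fh mprim nI1 [ha hs hgen hmin] g; split.
  case=> e [c E]; have := congr1 (comp_mpoly (tup f)) E.
  rewrite rmorphXn comp_sum.
  under eq_bigr do rewrite rmorphM /= minors_comp0 // mulr0.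
  rewrite big1 // => /eqP; rewrite expf_eq0 => /andP [_ /eqP] //.
move=> gim; apply: NNPP => Hrad.
have Hg : forall e, ~ in_idealG (maximal_minors (jacobian_dual a)) (g ^+ e).
  by move=> e H; apply: Hrad; exists e.
have [P [iP Ppr PG Pg]] := exists_prime Hg.
have N1 : ~ P 1 by have := Pg 0%N; rewrite expr0.
have [p [[c0 nPc0] Pker]] := kernel_vec iP N1 PG.
pose ev := comp_mpoly (tup p).
have FA : forall j, P (\sum_i ev (a j i) * 'X_i).
  move=> j; have := Pker j; congr P.
  under [RHS]eq_bigr => i _ do rewrite /ev (comp_lin _ (ha j i)) mulr_suml.
  rewrite exchange_big /=; apply: eq_bigr => l _.
  rewrite mxE mulr_suml; apply: eq_bigr => i _.
  by rewrite tupE -!scalerAl mulrC.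
have FB : forall b, is_syzygy f b -> P (\sum_i ev (b i) * 'X_i).
  move=> b /hgen [cc Hb].
  have -> : \sum_i ev (b i) * 'X_i = \sum_j ev (cc j) * (\sum_i ev (a j i) * 'X_i).
    under eq_bigr => i _ do rewrite Hb /ev comp_sum mulr_suml.
    rewrite exchange_big /=; apply: eq_bigr => j _; rewrite mulr_sumr.
    by apply: eq_bigr => i _; rewrite rmorphM mulrA.
  by apply: Psum => // j _; apply: Pmul.
have FC : forall i m0, P (ev (f m0) * 'X_i - ev (f i) * 'X_m0).
  move=> i m0.
  pose b i' := (i' == i)%:R * f m0 - (i' == m0)%:R * f i.
  have syz : is_syzygy f b.
    rewrite /is_syzygy /b.
    under eq_bigr do rewrite mulrBl -!mulrA.
    by rewrite sumrB !sum_delta mulrC subrr.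
  have := FB b syz; congr P.
  under eq_bigr do rewrite /b /ev rmorphB !rmorphM !rmorph_nat mulrBl -!mulrA.
  by rewrite sumrB !sum_delta.
have [e [h Eh]] := mprim c0.
pose mu := p c0 ^+ e.
pose H := \sum_m ev (h m) * 'X_m.
pose v i := ev (f i).
have muE : mu = \sum_m ev (h m) * v m.
  rewrite /mu -[p c0](tupE p) -comp_mpolyXU -rmorphXn Eh rmorph_sum.
  by apply: eq_bigr => m _; rewrite rmorphM.
have Pcong : forall i, P (mu * 'X_i - v i * H).
  move=> i.
  have -> : mu * 'X_i - v i * H = \sum_m ev (h m) * (v m * 'X_i - v i * 'X_m).
    rewrite muE /H mulr_suml mulr_sumr -sumrB; apply: eq_bigr => m _; ring.
  by apply: Psum => // m _; apply: Pmul => //; apply: FC.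
have d0 : (0 < d)%N.
  rewrite lt0n; apply/negP => /eqP d0; move: fh; rewrite d0 => fh0.
  have fc : forall i, f i = ((f i)@_0)%:MP by move=> i; apply: homog0_const.
  case: (classic (exists i, (f i)@_0 != 0)) => [[i ni]|Hz].
    apply: nI1; exists (fun j => (j == i)%:R * ((f i)@_0)^-1%:MP).
    rewrite (bigD1 i) //= eqxx mul1r big1 ?addr0; last first.
      by move=> j /negbTE ->; rewrite mul0r mul0r.
    by rewrite {2}fc -mpolyCM mulVf.
  have fz : forall i, f i = 0.
    move=> i; rewrite fc; apply/eqP; rewrite mpolyC_eq0; apply: NNPP => H1; apply: Hz; exists i; exact/negP.
  have [e' [h' Eh']] := mprim (Ordinal n0).
  move: Eh'; rewrite big1 => [/eqP|]; last by move=> i _; rewrite fz mulr0.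
  by rewrite expf_eq0 (negbTE (X_neq0 _ _)) andbF.
have FG : forall de, (pihomog mdeg de g) \mPo tup f = 0.
  by apply: pihomog_comp0 d0 _ gim => i; rewrite tnth_tup.
have Nmu : forall k', ~ P (mu ^+ k').
  move=> k'; rewrite /mu -exprM; exact: (Pnot_pow Ppr N1 nPc0).
have FH : forall de, P (pihomog mdeg de g).
  move=> de.
  suff : P (mu ^+ de * pihomog mdeg de g) by move/Ppr => [/Nmu|].
  have -> : mu ^+ de * pihomog mdeg de g =
      mu ^+ de * pihomog mdeg de g - H ^+ de * ev ((pihomog mdeg de g) \mPo tup f).
    by rewrite FG /ev rmorph0 mulr0 subr0.
  rewrite pihomog_compE {1}pihomogE /ev rmorph_sum !mulr_sumr -sumrB.
  apply: Psum => // m /eqP mde.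
  rewrite -!mul_mpolyC rmorphM /= comp_mpolyC mulrCA [X in _ - X]mulrCA -mulrBr.
  apply: Pmul => //.
  have mde2 : mdeg m = de by exact: mde.
  rewrite comp_mpolyX rmorph_prod mpolyXE_id -mde2 mdegE !expr_sum -!big_split /=.
  apply: Pcong_prod => // i _.
  rewrite rmorphXn tnth_tup -!exprMn; apply: Pcong_pow => //.
  by rewrite (mulrC H); apply: Pcong.
have gE := pihomog_partitionE (k := msize g) (mf := mdeg) (p := g) (leqnn _).
apply: (Pg 1%N); rewrite expr1 gE; apply: Psum => // de _; apply: FH.
Qed.
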